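(* Let $A$ and $B$ be alternating sign hypermatrices of order $n$. Then $A\preceq_B B$ if and only if $\Xi(A)_{i,j,k}\ge \Xi(B)_{i,j,k}$ for all $i,j,k\in\{0,1,\dots,n\}$.
   Context: Let $[n]=\{1,\dots,n\}$. A hypermatrix of order $n$ is an integer array $A=(A_{i,j,k})_{i,j,k\in[n]}$; its lines are the $n$-tuples obtained by fixing two of the three indices. An alternating sign hypermatrix of order $n$ is a hypermatrix with entries in $\{0,1,-1\}$ such that in every line the nonzero entries alternate in sign, beginning and ending with $+1$. $\Xi(A)$ is the array indexed by $\{0,\dots,n\}^3$ with $\Xi(A)_{i,j,k}=\sum_{a=1}^i\sum_{b=1}^j\sum_{c=1}^k A_{a,b,c}$. For $i_1<i_2$, $j_1<j_2$, $k_1<k_2$ in $[n]$, the positive T-block on $\{i_1,i_2\}\times\{j_1,j_2\}\times\{k_1,k_2\}$ is the hypermatrix that is zero outside these eight positions, with entries $+1$ at $(i_1,j_1,k_1),(i_2,j_2,k_1),(i_1,j_2,k_2),(i_2,j_1,k_2)$ and $-1$ at $(i_1,j_2,k_1),(i_2,j_1,k_1),(i_1,j_1,k_2),(i_2,j_2,k_2)$. For hypermatrices $A,B$ of order $n$, the Bruhat order is $A\preceq_B B$ iff $A-B$ is a (possibly empty) sum of positive T-blocks. *)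

(* Defs.v *)
From mathcomp Require Import all_boot all_order all_algebra.
Set Implicit Arguments. Unset Strict Implicit. Unset Printing Implicit Defensive.
Import Order.TTheory GRing.Theory Num.Theory.
Local Open Scope ring_scope.

(* A hypermatrix of order n: integer array indexed by [n]^3, here 'I_n ^3
   (index a : 'I_n stands for a+1 in [n]). *)
Definition hypermatrix (n : nat) := 'I_n -> 'I_n -> 'I_n -> int.

Definition alt_line (s : seq int) : bool :=
  let t := [seq x <- s | x != 0] in
  [&& all (fun x => (x == 0) || (x == 1) || (x == -1)) s,
      t != [::],
      head 0 t == 1,
      last 0 t == 1 &
      sorted (fun x y => y == - x) t].

Definition ASHM (n : nat) (A : hypermatrix n) : Prop :=
  (forall j k : 'I_n, alt_line [seq A i j k | i <- enum 'I_n]) /\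
  (forall i k : 'I_n, alt_line [seq A i j k | j <- enum 'I_n]) /\
  (forall i j : 'I_n, alt_line [seq A i j k | k <- enum 'I_n]).

(* Xi(A)_{i,j,k} for i,j,k in {0..n}: sum over a<=i, b<=j, c<=k (1-based),
   i.e. over 0-based indices a < i, b < j, c < k. *)
Definition Xi (n : nat) (A : hypermatrix n) (i j k : nat) : int :=
  \sum_(a < n | (a < i)%N) \sum_(b < n | (b < j)%N) \sum_(c < n | (c < k)%N)
     A a b c.

Definition Tblock (n : nat) (i1 i2 j1 j2 k1 k2 : 'I_n) : hypermatrix n :=
  fun a b c =>
    let s1 : int := if a == i1 then 1 else if a == i2 then -1 else 0 in
    let s2 : int := if b == j1 then 1 else if b == j2 then -1 else 0 in
    let s3 : int := if c == k1 then 1 else if c == k2 then -1 else 0 in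
    s1 * s2 * s3.

Definition tb_valid (n : nat) (t : 'I_n * 'I_n * 'I_n * 'I_n * 'I_n * 'I_n) : bool :=
  let: (i1, i2, j1, j2, k1, k2) := t in
  [&& (i1 < i2)%N, (j1 < j2)%N & (k1 < k2)%N].

Definition Tblock_of (n : nat) (t : 'I_n * 'I_n * 'I_n * 'I_n * 'I_n * 'I_n) :
  hypermatrix n :=
  let: (i1, i2, j1, j2, k1, k2) := t in Tblock i1 i2 j1 j2 k1 k2.

Definition bruhat_le (n : nat) (A B : hypermatrix n) : Prop :=
  exists ts : seq ('I_n * 'I_n * 'I_n * 'I_n * 'I_n * 'I_n),
    all (@tb_valid n) ts /\
    forall a b c : 'I_n,
      A a b c - B a b c = \sum_(t <- ts) Tblock_of t a b c.

(* Main.v *)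
Require Import Defs.
From mathcomp Require Import all_boot all_order all_algebra.
Import Order.TTheory GRing.Theory Num.Theory.
Set Implicit Arguments. Unset Strict Implicit.
Local Open Scope ring_scope.

Lemma alt_path_sum (x : int) (t : seq int) :
  path (fun x y => y == - x) x t ->
  \sum_(y <- x :: t) y = (if odd (size t) then 0 else x) /\
  last x t = (if odd (size t) then - x else x).
Proof.
elim: t x => [|y t IH] x /=; first by rewrite big_seq1.
move=> /andP [/eqP -> Hp].
have [IH1 IH2] := IH _ Hp.
rewrite big_cons IH1 IH2 opprK.
by case: (odd (size t)) => /=; split => //; rewrite ?addr0 ?addrN.
Qed.

Lemma alt_line_sum (s : seq int) : alt_line s -> \sum_(x <- s) x = 1.
Proof.
case/and5P => _ Hne Hh Hl Hs.
have -> : \sum_(x <- s) x = \sum_(x <- [seq x <- s | x != 0]) x.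
  rewrite big_filter [RHS]big_mkcond /=; apply: eq_bigr => x _.
  by case: eqP => // ->.
move: Hne Hh Hl Hs; case: [seq x <- s | x != 0] => [|x t] // _ /= /eqP -> /eqP Hl Hs.
have [H1 H2] := alt_path_sum Hs.
rewrite H1; move: Hl; rewrite H2; case: (odd (size t)) => //.

Qed.

Lemma line_sum_i n (A : hypermatrix n) : ASHM A ->
  forall j k : 'I_n, \sum_(i < n) A i j k = 1.
Proof.
move=> [H _] j k; rewrite -(alt_line_sum (H j k)) big_map big_enum /=.
by apply: eq_bigl => i.
Qed.
Lemma line_sum_j n (A : hypermatrix n) : ASHM A ->
  forall i k : 'I_n, \sum_(j < n) A i j k = 1.
Proof.
move=> [_ [H _]] i k; rewrite -(alt_line_sum (H i k)) big_map big_enum /=.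
by apply: eq_bigl => j.
Qed.
Lemma line_sum_k n (A : hypermatrix n) : ASHM A ->
  forall i j : 'I_n, \sum_(k < n) A i j k = 1.
Proof.
move=> [_ [_ H]] i j; rewrite -(alt_line_sum (H i j)) big_map big_enum /=.
by apply: eq_bigl => k.
Qed.
Lemma sum_delta n (P : pred 'I_n) (x : 'I_n) :
  \sum_(a < n | P a) ((a == x)%:R : int) = (P x)%:R.
Proof.
rewrite big_mkcond (bigD1 x) //= eqxx big1 ?addr0.
  by case: (P x).
by move=> a /negbTE ->; case: (P a).
Qed.

Definition sg3 n (u v a : 'I_n) : int :=
  if a == u then 1 else if a == v then -1 else 0.

Lemma sg3_sum_ge0 n (u v : 'I_n) (i : nat) : (u < v)%N ->
  0 <= \sum_(a < n | (a < i)%N) sg3 u v a.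
Proof.
move=> uv.
have -> : \sum_(a < n | (a < i)%N) sg3 u v a =
   \sum_(a < n | (a < i)%N) (((a == u)%:R : int) - (a == v)%:R).
  apply: eq_bigr => a _; rewrite /sg3.
  case: (eqVneq a u) => [->|au]; first by rewrite (_ : (u == v) = false) ?subr0 //; apply/eqP => E; rewrite E ltnn in uv.
  by case: (a == v).
rewrite sumrB !(sum_delta (fun a : 'I_n => (a < i)%N)).
case Hv: (v < i)%N; last by rewrite subr0; case: (u < i)%N.
by rewrite (_ : (u < i)%N = true) ?subrr //; apply: ltn_trans Hv.
Qed.

Lemma Xi_prod n (f g h : 'I_n -> int) i j k :
  Xi (fun a b c => f a * g b * h c) i j k =
  (\sum_(a < n | (a < i)%N) f a) * (\sum_(b < n | (b < j)%N) g b) *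
  (\sum_(c < n | (c < k)%N) h c).
Proof.
rewrite /Xi big_distrl /= big_distrl /=.
apply: eq_bigr => a _. rewrite -mulrA.
rewrite big_distrl big_distrr /=; apply: eq_bigr => b _.
rewrite big_distrr big_distrr /=; apply: eq_bigr => c _.
by rewrite mulrA.
Qed.

Lemma Xi_Tblock_ge0 n (t : 'I_n * 'I_n * 'I_n * 'I_n * 'I_n * 'I_n) i j k :
  tb_valid t -> 0 <= Xi (Tblock_of t) i j k.
Proof.
case: t => [[[[[i1 i2] j1] j2] k1] k2] /= /and3P [hi hj hk].
have -> : Xi (Tblock i1 i2 j1 j2 k1 k2) i j k =
  Xi (fun a b c => sg3 i1 i2 a * sg3 j1 j2 b * sg3 k1 k2 c) i j k by [].
rewrite Xi_prod.
by rewrite !mulr_ge0 // sg3_sum_ge0.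
Qed.

Lemma Xi_ext n (f g : hypermatrix n) i j k :
  (forall a b c, f a b c = g a b c) -> Xi f i j k = Xi g i j k.
Proof.
move=> H; rewrite /Xi; apply: eq_bigr => a _; apply: eq_bigr => b _.
by apply: eq_bigr => c _.
Qed.

Lemma Xi_add n (f g : hypermatrix n) i j k :
  Xi (fun a b c => f a b c + g a b c) i j k = Xi f i j k + Xi g i j k.
Proof.
rewrite /Xi -big_split; apply: eq_bigr => a _.
rewrite -big_split; apply: eq_bigr => b _.
by rewrite -big_split.
Qed.

Lemma Xi_sub n (f g : hypermatrix n) i j k :
  Xi (fun a b c => f a b c - g a b c) i j k = Xi f i j k - Xi g i j k.
Proof.
rewrite /Xi -sumrB; apply: eq_bigr => a _.
rewrite -sumrB; apply: eq_bigr => b _.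
by rewrite -sumrB.
Qed.

Lemma Xi_seq_ge0 n (ts : seq ('I_n * 'I_n * 'I_n * 'I_n * 'I_n * 'I_n)) i j k :
  all (@tb_valid n) ts ->
  0 <= Xi (fun a b c => \sum_(t <- ts) Tblock_of t a b c) i j k.
Proof.
elim: ts => [|t ts IH] /=.
  by move=> _; rewrite (Xi_ext (g := fun _ _ _ => 0)) ?/Xi ?big1 // => *; rewrite ?big_nil ?big1.
move=> /andP [ht hts].
rewrite (Xi_ext (g := fun a b c => Tblock_of t a b c + \sum_(t <- ts) Tblock_of t a b c)); last by move=> *; rewrite big_cons.
by rewrite Xi_add addr_ge0 // ?IH // Xi_Tblock_ge0.
Qed.
Lemma diff_sum n (g : 'I_n -> int) (z : 'I_n) :
  \sum_(c < n | (c < z.+1)%N) g c - \sum_(c < n | (c < z)%N) g c = g z.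
Proof.
rewrite (bigD1 z) //= ?ltnSn // -addrA addrC.
rewrite (eq_bigl (fun c : 'I_n => (c < z)%N)); first by rewrite subrr add0r.
move=> c /=; rewrite ltnS -val_eqE /=.
by case: (ltngtP c z).
Qed.

Definition ee n (a x : 'I_n) : int := ((x:nat) == a)%:R - ((x:nat) == a.+1)%:R.

Lemma sum_ee n (F : nat -> int) (x : 'I_n) : F 0%N = 0 ->
  \sum_(a < n) ee a x * F a.+1 = F x.+1 - F x.
Proof.
move=> F0.
rewrite (eq_bigr (fun a : 'I_n => ((x:nat) == a)%:R * F a.+1 - ((x:nat) == a.+1)%:R * F a.+1)); last by move=> a _; rewrite /ee mulrBl.
rewrite sumrB; congr (_ - _).
  rewrite (bigD1 x) //= eqxx mul1r big1 ?addr0 // => a ha.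
  rewrite (_ : ((x:nat) == a) = false) ?mul0r //.
  by apply/negbTE; move: ha; rewrite eq_sym; apply: contra => /eqP e; apply/eqP; exact: val_inj.
case: x => [[|x'] hx] /=.
  by rewrite F0; apply: big1 => a _; rewrite mul0r.
rewrite (bigD1 (Ordinal (ltnW hx))) //= eqxx mul1r big1 ?addr0 // => a ha.
rewrite eqSS (_ : (x' == a) = false) ?mul0r //.
by apply/negbTE; move: ha; rewrite eq_sym; apply: contra => /eqP e; apply/eqP; exact: val_inj.
Qed.

Lemma ee_sg n (a x : 'I_n) : (a.+1 < n)%N ->
  (if x == a then 1 else if x == insubd a a.+1 then -1 else 0) = ee a x.
Proof.
move=> ha.
have E2 : (x == insubd a a.+1) = ((x:nat) == a.+1) by rewrite -val_eqE val_insubd ha.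
rewrite E2 /ee.
case: (eqVneq x a) => [->|ne].
  by rewrite eqxx (ltn_eqF (ltnSn a)) subr0.
have -> : ((x:nat) == a) = false.
  by apply/negbTE; move: ne; apply: contra => /eqP e; apply/eqP; exact: val_inj.
by case: ((x:nat) == a.+1); rewrite ?sub0r ?subr0.
Qed.

Lemma sum_nseq_int (T : Type) (F : T -> int) m u :
  \sum_(t <- nseq m u) F t = F u *+ m.
Proof.
elim: m => [|m IH] /=; first by rewrite big_nil.
by rewrite big_cons IH mulrS.
Qed.

Lemma all_flat (T : Type) (P : pred T) (ss : seq (seq T)) :
  all P (flatten ss) = all (all P) ss.
Proof. by elim: ss => //= s ss IH; rewrite all_cat IH. Qed.

Lemma sum_enum_ord n (G : 'I_n -> int) :
  \sum_(a <- enum 'I_n) G a = \sum_(a < n) G a.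
Proof. by rewrite big_enum; apply: eq_bigl. Qed.

Lemma Xi_0k n (D : hypermatrix n) I J : Xi D I J 0 = 0.
Proof. by apply: big1 => a _; apply: big1 => b _; apply: big_pred0 => c. Qed.
Lemma Xi_0j n (D : hypermatrix n) I K : Xi D I 0 K = 0.
Proof. by apply: big1 => a _; apply: big_pred0 => b. Qed.
Lemma Xi_0i n (D : hypermatrix n) J K : Xi D 0 J K = 0.
Proof. by apply: big_pred0 => a. Qed.

Lemma L1 n (D : hypermatrix n) I J (z : 'I_n) :
  Xi D I J z.+1 - Xi D I J z =
  \sum_(a < n | (a < I)%N) \sum_(b < n | (b < J)%N) D a b z.
Proof.
rewrite /Xi -sumrB; apply: eq_bigr => a _.
rewrite -sumrB; apply: eq_bigr => b _.
exact: diff_sum.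
Qed.

Lemma L2 n (D : hypermatrix n) I (y z : 'I_n) :
  \sum_(a < n | (a < I)%N) \sum_(b < n | (b < y.+1)%N) D a b z -
  \sum_(a < n | (a < I)%N) \sum_(b < n | (b < y)%N) D a b z =
  \sum_(a < n | (a < I)%N) D a y z.
Proof.
rewrite -sumrB; apply: eq_bigr => a _.
exact: (diff_sum (fun b => D a b z)).
Qed.

Lemma face_i n (A B : hypermatrix n) : ASHM A -> ASHM B ->
  forall J K, Xi (fun a b c => A a b c - B a b c) n J K = 0.
Proof.
move=> HA HB J K.
rewrite /Xi exchange_big /=; apply: big1 => b _.
rewrite exchange_big /=; apply: big1 => c _.
rewrite (eq_bigl xpredT); last by move=> a /=; rewrite ltn_ord.
by rewrite sumrB (line_sum_i HA) (line_sum_i HB) subrr.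
Qed.

Lemma face_j n (A B : hypermatrix n) : ASHM A -> ASHM B ->
  forall I K, Xi (fun a b c => A a b c - B a b c) I n K = 0.
Proof.
move=> HA HB I K.
rewrite /Xi; apply: big1 => a _.
rewrite exchange_big /=; apply: big1 => c _.
rewrite (eq_bigl xpredT); last by move=> b /=; rewrite ltn_ord.
by rewrite sumrB (line_sum_j HA) (line_sum_j HB) subrr.
Qed.

Lemma face_k n (A B : hypermatrix n) : ASHM A -> ASHM B ->
  forall I J, Xi (fun a b c => A a b c - B a b c) I J n = 0.
Proof.
move=> HA HB I J.
rewrite /Xi; apply: big1 => a _; apply: big1 => b _.
rewrite (eq_bigl xpredT); last by move=> c /=; rewrite ltn_ord.
by rewrite sumrB (line_sum_k HA) (line_sum_k HB) subrr.
Qed.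

Unset Implicit Arguments. Set Strict Implicit.

Theorem mainTheorem5 (n : nat) (A B : hypermatrix n) :
  ASHM A -> ASHM B ->
  (bruhat_le A B <->
   (forall i j k : nat, (i <= n)%N -> (j <= n)%N -> (k <= n)%N ->
      Xi B i j k <= Xi A i j k)).
Proof.
move=> HA HB; split.
  move=> [ts [Hv Heq]] i j k _ _ _.
  rewrite -subr_ge0 -Xi_sub.
  rewrite (Xi_ext (g := fun a b c => \sum_(t <- ts) Tblock_of t a b c)) //.
  exact: Xi_seq_ge0.
move=> H.
pose D := fun a b c : 'I_n => A a b c - B a b c.
pose X := fun I J K => Xi D I J K.
have Xge0 : forall I J K, (I <= n)%N -> (J <= n)%N -> (K <= n)%N -> 0 <= X I J K.
  by move=> I J K hI hJ hK; rewrite /X /D Xi_sub subr_ge0; apply: H.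
have Fi := face_i HA HB; have Fj := face_j HA HB; have Fk := face_k HA HB.
pose m := fun a b c : 'I_n =>
  if [&& (a.+1 < n)%N, (b.+1 < n)%N & (c.+1 < n)%N] then `|X a.+1 b.+1 c.+1|%N else 0%N.
pose blk := fun a b c : 'I_n =>
  (a, insubd a a.+1, b, insubd b b.+1, c, insubd c c.+1).
exists (flatten [seq flatten [seq flatten [seq nseq (m a b c) (blk a b c)
   | c <- enum 'I_n] | b <- enum 'I_n] | a <- enum 'I_n]).
split.
  rewrite all_flat all_map; apply/allP => a _ /=.
  rewrite all_flat all_map; apply/allP => b _ /=.
  rewrite all_flat all_map; apply/allP => c _ /=.
  rewrite all_nseq /m; case: ifP => [/and3P [ha hb hc] | _] //=.
  apply/orP; right.
  by rewrite /tb_valid /blk /= !val_insubd ha hb hc !ltnSn.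
move=> x y z.
transitivity (\sum_(a < n) \sum_(b < n) \sum_(c < n)
   ee a x * (ee b y * (ee c z * X a.+1 b.+1 c.+1))); last first.
  rewrite big_flatten big_map sum_enum_ord; apply: eq_bigr => a _.
  rewrite big_flatten big_map sum_enum_ord; apply: eq_bigr => b _.
  rewrite big_flatten big_map sum_enum_ord; apply: eq_bigr => c _.
  rewrite sum_nseq_int /m.
  case: ifP => [/and3P [ha hb hc] | hn].
    rewrite -mulr_natr natz gez0_abs; last by apply: Xge0.
    rewrite /blk /= /Tblock !ee_sg //.
    by rewrite !mulrA.
  rewrite mulr0n.
  have -> : X a.+1 b.+1 c.+1 = 0.
    case: (ltnP a.+1 n) hn => ha; last first.
      by move=> _; have -> : a.+1 = n by apply/eqP; rewrite eqn_leq ha ltn_ord.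
    case: (ltnP b.+1 n) => hb; last first.
      by move=> _; have -> : b.+1 = n by apply/eqP; rewrite eqn_leq hb ltn_ord.
    case: (ltnP c.+1 n) => hc; last first.
      by move=> _; have -> : c.+1 = n by apply/eqP; rewrite eqn_leq hc ltn_ord.
    by [] || (move=> hh; discriminate hh).
  by rewrite !mulr0.
pose G' := fun I => (X I y.+1 z.+1 - X I y.+1 z) - (X I y z.+1 - X I y z).
transitivity (\sum_(a < n) ee a x * G' a.+1); last first.
  apply: eq_bigr => a _.
  have inner : \sum_(b < n) \sum_(c < n) ee b y * (ee c z * X a.+1 b.+1 c.+1)
     = G' a.+1.
    transitivity (\sum_(b < n) ee b y * (X a.+1 b.+1 z.+1 - X a.+1 b.+1 z)).
      apply: eq_bigr => b _; rewrite -mulr_sumr.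
      by rewrite (sum_ee (F := fun c => X a.+1 b.+1 c)) // /X Xi_0k.
    by rewrite (sum_ee (F := fun b => X a.+1 b z.+1 - X a.+1 b z)) //= /X !Xi_0j subrr.
  rewrite -inner mulr_sumr; apply: eq_bigr => b _.
  by rewrite mulr_sumr.
rewrite (sum_ee (F := G')); last by rewrite /G' /X !Xi_0i !subrr.
rewrite /G' /X !L1 !L2.
by rewrite (diff_sum (fun a => D a y z)).
Qed.
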